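(* Let $(G,\lambda)$ be a matching problem, $G=(V,E)$ a finite simple graph and $\lambda\in\mathbb{R}_{>0}^n$, and consider the condition (C): $\sum_{i\in V(\mathcal{I})}\lambda_i>\frac12\sum_{i\in V}\lambda_i$ for every independent set $\mathcal{I}$ of $G$, where $V(\mathcal{I})=\bigcup_{i\in\mathcal{I}}V_i$. If either (i) $G$ is a complete graph with $n\ge3$ nodes, or (ii) $G$ is the diamond graph ($V=\{1,2,3,4\}$, $E=\{\{1,2\},\{1,3\},\{2,3\},\{2,4\},\{3,4\}\}$), then stabilizability of $(G,\lambda)$ implies (C), and therefore $(G,\lambda,\Phi)$ is stable for every greedy policy $\Phi$ adapted to $G$. If either (iii) $G$ has diameter at least $3$, or (iv) $G$ contains a node of degree $1$, then (C) is never satisfied.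
   Context: $V_i$ is the set of neighbours of $i$; an independent set is a non-empty set of pairwise non-adjacent nodes. Matching model: classes arrive as independent Poisson processes of rates $\lambda_i$; classes $i,j$ matchable iff $\{i,j\}\in E$; unmatched items wait. A policy adapted to $G$: countable state space with queue-size map $|\cdot|$ and unique empty state, probabilities $\Phi(s,i,j,s')$ of matching an arriving class-$i$ item with a waiting neighbour class $j$ or leaving it unmatched ($j=\bot$), new state consistent with queue sizes, irreducible state chain from the empty state. Greedy: no arriving item is left unmatched while a compatible item is waiting. Stable: the state chain is positive recurrent; $(G,\lambda)$ is stabilizable if some policy makes it stable. *)

(* Defs.v *)
From HB Require Import structures.
From mathcomp Require Import all_boot all_order all_algebra.
From mathcomp Require Import all_classical all_reals all_analysis.
From Stdlib Require Import Relation_Operators.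

Set Implicit Arguments.
Unset Strict Implicit.
Unset Printing Implicit Defensive.

Import Order.TTheory GRing.Theory Num.Theory.
Local Open Scope ring_scope.

Definition simple_graph (n : nat) (e : rel 'I_n) : Prop :=
  symmetric e /\ irreflexive e.

Definition nbhd (n : nat) (e : rel 'I_n) (i : 'I_n) : {set 'I_n} :=
  [set j | e i j].

Definition independent (n : nat) (e : rel 'I_n) (I : {set 'I_n}) : bool :=
  (0 < #|I|)%N && [forall i in I, forall j in I, ~~ e i j].

Definition nbhd_set (n : nat) (e : rel 'I_n) (I : {set 'I_n}) : {set 'I_n} :=
  \bigcup_(i in I) nbhd e i.

Definition condC (R : realType) (n : nat) (e : rel 'I_n) (lam : 'I_n -> R)
  : Prop :=
  forall I : {set 'I_n}, independent e I ->
    \sum_(i in nbhd_set e I) lam i > 2^-1 * \sum_(i : 'I_n) lam i.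

Definition complete_graph (n : nat) (e : rel 'I_n) : Prop :=
  forall x y, e x y = (x != y).

(* The diamond graph on {1,2,3,4}, encoded on 'I_4 = {0,1,2,3} via
   node k |-> k-1: edges {1,2},{1,3},{2,3},{2,4},{3,4}. *)
Definition diamond_edge (x y : nat) : bool :=
  [|| (x == 0) && (y == 1), (x == 0) && (y == 2), (x == 1) && (y == 2),
      (x == 1) && (y == 3) | (x == 2) && (y == 3)]%N.

Definition diamond_rel : rel 'I_4 :=
  fun x y => diamond_edge x y || diamond_edge y x.

Fixpoint within (n : nat) (e : rel 'I_n) (k : nat) (x y : 'I_n) : bool :=
  match k with
  | 0 => x == y
  | k'.+1 => within e k' x y || [exists z, e x z && within e k' z y]
  end.

(* diameter >= 3 : some pair of nodes is at distance >= 3 (distance is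
   +infinity between different connected components) *)
Definition diameter_ge3 (n : nat) (e : rel 'I_n) : Prop :=
  exists x y : 'I_n, ~~ within e 2 x y.

Definition degree (n : nat) (e : rel 'I_n) (x : 'I_n) : nat := #|nbhd e x|.

(* A policy: a countable state space, a queue-size map, a distinguished
   empty state and the matching probabilities
   Phi s i j s' (j = None stands for "left unmatched", i.e. j = bottom). *)
Record policy (R : realType) (n : nat) := Policy {
  pstate : countType;
  qsize : pstate -> 'I_n -> nat;
  pempty : pstate;
  Phi : pstate -> 'I_n -> option 'I_n -> pstate -> R
}.
Arguments pstate {R n} p.
Arguments qsize {R n} p _ _.
Arguments pempty {R n} p.
Arguments Phi {R n} p _ _ _ _.

(* Transition kernel of the state chain observed at arrival epochs:
   the arriving item is of class i with probability lam_i / sum lam. *)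
Definition trans (R : realType) (n : nat) (lam : 'I_n -> R) (p : policy R n)
  (s s' : pstate p) : R :=
  \sum_(i : 'I_n) (lam i / \sum_(k : 'I_n) lam k) *
     \sum_(j : option 'I_n) Phi p s i j s'.
Arguments trans {R n} lam p s s'.

Definition adapted (R : realType) (n : nat) (e : rel 'I_n) (lam : 'I_n -> R)
  (p : policy R n) : Prop :=
  (forall s, (forall x, qsize p s x = 0%N) <-> s = pempty p) /\
  (forall s i j s', 0 <= Phi p s i j s') /\
  (forall s i,
     \sum_(j : option 'I_n) (\esum_(s' in @setT (pstate p)) (Phi p s i j s')%:E)
       = 1%E) /\
  (forall s i s', Phi p s i None s' <> 0 ->
     forall x, qsize p s' x = (qsize p s x + (x == i))%N) /\
  (forall s i j s', Phi p s i (Some j) s' <> 0 ->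
     [/\ e i j, (0 < qsize p s j)%N &
         forall x, qsize p s' x = (qsize p s x - (x == j))%N]) /\
  (forall s s' : pstate p,
     clos_refl_trans (pstate p) (fun a b => 0 < trans lam p a b) s s').

Definition greedy (R : realType) (n : nat) (e : rel 'I_n) (p : policy R n)
  : Prop :=
  forall s i j s', e i j -> (0 < qsize p s j)%N -> Phi p s i None s' = 0.

(* first_return lam p k s : probability, starting from s, that the chain
   hits the empty state for the first time at step k+1 *)
Fixpoint first_return (R : realType) (n : nat) (lam : 'I_n -> R)
  (p : policy R n) (k : nat) (s : pstate p) : \bar R :=
  match k with
  | 0 => (trans lam p s (pempty p))%:E
  | k'.+1 => \esum_(s' in [set x | x <> pempty p]%classic)
               ((trans lam p s s')%:E * @first_return R n lam p k' s')%E
  end.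
Arguments first_return {R n} lam p k s.

(* stable: the (irreducible) state chain is positive recurrent, i.e. the
   empty state is recurrent with finite expected return time *)
Definition stable (R : realType) (n : nat) (lam : 'I_n -> R) (p : policy R n)
  : Prop :=
  (\sum_(k <oo) first_return lam p k (pempty p) = 1)%E /\
  (\sum_(k <oo) ((k.+1)%:R%:E * first_return lam p k (pempty p)) < +oo)%E.

Definition stabilizable (R : realType) (n : nat) (e : rel 'I_n)
  (lam : 'I_n -> R) : Prop :=
  exists p : policy R n, adapted e lam p /\ stable lam p.

(* Main.v *)
Require Import Defs.
From HB Require Import structures.
From mathcomp Require Import all_boot all_order all_algebra.
From mathcomp Require Import all_classical all_reals all_analysis.
From Stdlib Require Import Relation_Operators.
From mathcomp Require Import ring lra.

Import Order.TTheory GRing.Theory Num.Theory.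
Local Open Scope ring_scope.

Set Implicit Arguments.
Unset Strict Implicit.
Unset Printing Implicit Defensive.

Section Helpers1.
Local Open Scope classical_set_scope.
Lemma esumZ (R : realType) (T : choiceType) (A : set T) (a : T -> \bar R) (c : R) :
  0 <= c -> (forall x, 0 <= a x)%E ->
  (\esum_(x in A) (c%:E * a x) = c%:E * \esum_(x in A) a x)%E.
Proof.
move=> c0 a0; have [->|cn0] := eqVneq c 0.
  by rewrite mul0e esum1// => x _; rewrite mul0e.
have cp : 0 < c by rewrite lt_def cn0.
apply/eqP; rewrite eq_le; apply/andP; split.
  apply: ge_ereal_sup => _ [X XA <-] /=.
  rewrite -ge0_mule_fsumr// lee_pmul2l// ?lte_fin//.
  by apply: ereal_sup_ubound; exists X.
rewrite -lee_pdivlMl// ?lte_fin//.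
apply: ge_ereal_sup => _ [X XA <-] /=.
rewrite lee_pdivlMl// ?lte_fin// ge0_mule_fsumr//.
by apply: ereal_sup_ubound; exists X.
Qed.

End Helpers1.

Section Helpers2.
Local Open Scope classical_set_scope.
Lemma esum_subsetT (R : realType) (T : choiceType) (A : set T) (a : T -> \bar R) :
  (forall x, 0 <= a x)%E -> (\esum_(x in A) a x <= \esum_(x in setT) a x)%E.
Proof.
move=> a0; rewrite esum_mkcond; apply: le_esum => x _.
by case: ifP => // _; exact: a0.
Qed.

Section Chain.
Variables (R : realType) (n : nat) (e : rel 'I_n) (lam : 'I_n -> R) (p : policy R n).
Hypothesis lam_gt0 : forall i, 0 < lam i.
Hypothesis n_gt0 : (0 < n)%N.
Hypothesis Had : adapted e lam p.

Local Notation S := (pstate p).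
Local Notation e0 := (pempty p).
Local Notation T := (trans lam p).

Definition Lam := \sum_(k : 'I_n) lam k.
Definition cc (i : 'I_n) : R := lam i / Lam.

Lemma Lam_gt0 : 0 < Lam.
Proof.
pose i0 : 'I_n := Ordinal n_gt0.
rewrite /Lam (bigD1 i0) //=.
have h1 := lam_gt0 i0.
have h2 : 0 <= \sum_(k | k != i0) lam k by apply: sumr_ge0 => k _; exact: ltW.
lra.
Qed.

Lemma cc_ge0 i : 0 <= cc i.
Proof. by rewrite /cc divr_ge0 // ltW // ?lam_gt0 // Lam_gt0. Qed.

Lemma sum_cc : \sum_i cc i = 1.
Proof. by rewrite /cc -mulr_suml -/Lam mulfV // gt_eqF // Lam_gt0. Qed.

Lemma Phi_ge0 s i j s' : 0 <= Phi p s i j s'.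
Proof. by case: Had => _ [h _]; exact: h. Qed.

Lemma Phi_sum1 s i :
  (\sum_(j : option 'I_n) (\esum_(s' in @setT S) (Phi p s i j s')%:E) = 1)%E.
Proof. by case: Had => _ [_ [h _]]; exact: h. Qed.

Lemma T_def s s' : T s s' = \sum_i cc i * \sum_j Phi p s i j s'.
Proof. by []. Qed.

Lemma T_ge0 s s' : 0 <= T s s'.
Proof.
rewrite T_def; apply: sumr_ge0 => i _; apply: mulr_ge0; first exact: cc_ge0.
by apply: sumr_ge0 => j _; exact: Phi_ge0.
Qed.

Lemma T_neq0 s s' : T s s' != 0 -> exists i j, Phi p s i j s' != 0.
Proof.
apply: contraNP => /forallNP H; rewrite T_def big1 // => i _.
rewrite big1 ?mulr0 // => j _.
have /forallNP := H i => /(_ j) /negP; by rewrite negbK => /eqP.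
Qed.

Local Open Scope ereal_scope.

Lemma esumT (A : set S) (g : S -> \bar R) s : (forall x, 0 <= g x)%E ->
  (\esum_(s' in A) ((T s s')%:E * g s') =
   \sum_i (cc i)%:E * \sum_j \esum_(s' in A) ((Phi p s i j s')%:E * g s'))%E.
Proof.
move=> g0.
transitivity (\esum_(s' in A) \sum_i ((cc i)%:E * \sum_j ((Phi p s i j s')%:E * g s')))%E.
  apply: eq_esum => s' _; rewrite T_def -sumEFin ge0_sume_distrl; last first.
    move=> i _; apply: mulr_ge0; first exact: cc_ge0.
    by apply: sumr_ge0 => j _; exact: Phi_ge0.
  apply: eq_bigr => i _; rewrite EFinM -muleA -sumEFin ge0_sume_distrl //.
  by move=> j _; rewrite lee_fin; exact: Phi_ge0.
rewrite esum_sum; last first.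
  move=> s' i _ _; apply: mule_ge0; first by rewrite lee_fin cc_ge0.
  by apply: sume_ge0 => j _; apply: mule_ge0 => //; rewrite lee_fin Phi_ge0.
apply: eq_bigr => i _; rewrite esumZ ?cc_ge0 //; last first.
  by move=> x; apply: sume_ge0 => j _; apply: mule_ge0 => //; rewrite lee_fin Phi_ge0.
rewrite esum_sum //.
by move=> x j _ _; apply: mule_ge0 => //; rewrite lee_fin Phi_ge0.
Qed.

Lemma esumPhi_le (A : set S) s i :
  (\sum_j \esum_(s' in A) (Phi p s i j s')%:E <= 1)%E.
Proof.
rewrite -(Phi_sum1 s i); apply: lee_sum => j _; apply: esum_subsetT => x.
by rewrite lee_fin Phi_ge0.
Qed.

Lemma drift_le (A : set S) s (g : S -> \bar R) (b : 'I_n -> R) :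
  (forall x, 0 <= g x)%E -> (forall i, (0 <= b i)%R) ->
  (forall i j s', A s' -> (Phi p s i j s' != 0)%R -> g s' <= (b i)%:E)%E ->
  (\esum_(s' in A) ((T s s')%:E * g s') <= \sum_i (cc i * b i)%R%:E)%E.
Proof.
move=> g0 b0 hb; rewrite esumT //; apply: lee_sum => i _.
rewrite (EFinM (cc i)); apply: lee_wpmul2l; first by rewrite lee_fin cc_ge0.
apply: (@le_trans _ _ (\sum_j ((b i)%:E * \esum_(s' in A) (Phi p s i j s')%:E))%E).
  apply: lee_sum => j _; rewrite -esumZ //; last by move=> x; rewrite lee_fin Phi_ge0.
  apply: le_esum => x Ax.
  have [->|hn] := eqVneq (Phi p s i j x) 0%R; first by rewrite !(mul0e, mule0).
  rewrite [X in (_ <= X)%E]muleC; apply: lee_wpmul2l; first by rewrite lee_fin Phi_ge0.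
  exact: (hb i j x Ax hn).
rewrite -ge0_sume_distrr; last by move=> j _; apply: esum_ge0 => x _; rewrite lee_fin Phi_ge0.
rewrite -[X in (_ <= X)%E]mule1; apply: lee_wpmul2l; first by rewrite lee_fin.
exact: esumPhi_le.
Qed.

Lemma drift_ge s (g : S -> \bar R) (b : 'I_n -> R) :
  (forall x, 0 <= g x)%E -> (forall i, (0 <= b i)%R) ->
  (forall i j s', (Phi p s i j s' != 0)%R -> (b i)%:E <= g s')%E ->
  (\sum_i (cc i * b i)%R%:E <= \esum_(s' in setT) ((T s s')%:E * g s'))%E.
Proof.
move=> g0 b0 hb; rewrite esumT //; apply: lee_sum => i _.
rewrite (EFinM (cc i)); apply: lee_wpmul2l; first by rewrite lee_fin cc_ge0.
apply: (@le_trans _ _ (\sum_j ((b i)%:E * \esum_(s' in setT) (Phi p s i j s')%:E))%E); last first.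
  apply: lee_sum => j _; rewrite -esumZ //; last by move=> x; rewrite lee_fin Phi_ge0.
  apply: le_esum => x Ax.
  have [->|hn] := eqVneq (Phi p s i j x) 0%R; first by rewrite !(mul0e, mule0).
  rewrite [X in (X <= _)%E]muleC; apply: lee_wpmul2l; first by rewrite lee_fin Phi_ge0.
  exact: (hb i j x hn).
rewrite -ge0_sume_distrr; last by move=> j _; apply: esum_ge0 => x _; rewrite lee_fin Phi_ge0.
by rewrite Phi_sum1 mule1.
Qed.

Lemma esumT1 s : (\esum_(s' in setT) ((T s s')%:E * 1) = 1)%E.
Proof.
apply/eqP; rewrite eq_le; apply/andP; split.
  apply: le_trans (drift_le (b := fun=> 1%R) _ _ _) _ => //.
  by rewrite sumEFin; under eq_bigr do rewrite mulr1; rewrite sum_cc.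
apply: le_trans _ (drift_ge (b := fun=> 1%R) _ _ _) => //.
by rewrite sumEFin; under eq_bigr do rewrite mulr1; rewrite sum_cc.
Qed.

Definition K (g : S -> \bar R) (s : S) : \bar R :=
  (\esum_(s' in [set x | x <> e0]) ((T s s')%:E * g s'))%E.

Lemma K_ge0 g s : (forall x, 0 <= g x)%E -> (0 <= K g s)%E.
Proof. by move=> g0; apply: esum_ge0 => x _; apply: mule_ge0 => //; rewrite lee_fin T_ge0. Qed.

Lemma esum_split g s : (forall x, 0 <= g x)%E ->
  (\esum_(s' in setT) ((T s s')%:E * g s') = (T s e0)%:E * g e0 + K g s)%E.
Proof.
move=> g0; rewrite (esumID [set e0]); last by move=> x _; apply: mule_ge0 => //; rewrite lee_fin T_ge0.
rewrite setTI esum_set1 //; last by apply: mule_ge0 => //; rewrite lee_fin T_ge0.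
by rewrite setTI.
Qed.


Lemma KD f g s : (forall x, 0 <= f x) -> (forall x, 0 <= g x) ->
  K (fun x => f x + g x) s = K f s + K g s.
Proof.
move=> f0 g0; rewrite /K -esumD; last 2 first.
- by move=> x _; apply: mule_ge0 => //; rewrite lee_fin T_ge0.
- by move=> x _; apply: mule_ge0 => //; rewrite lee_fin T_ge0.
by apply: eq_esum => x _; rewrite ge0_muleDr.
Qed.

Lemma KZ (c : R) f s : (0 <= c)%R -> (forall x, 0 <= f x) ->
  K (fun x => c%:E * f x) s = c%:E * K f s.
Proof.
move=> c0 f0; rewrite /K -esumZ //; last first.
  by move=> x; apply: mule_ge0 => //; rewrite lee_fin T_ge0.
by apply: eq_esum => x _; rewrite muleCA.
Qed.

Lemma K_sum (N : nat) (f : nat -> S -> \bar R) s : (forall k x, 0 <= f k x) ->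
  K (fun x => \sum_(k < N) f k x) s = \sum_(k < N) K (f k) s.
Proof.
move=> f0; rewrite /K -esum_sum; last first.
  by move=> x k _ _; apply: mule_ge0 => //; rewrite lee_fin T_ge0.
by apply: eq_esum => x _; rewrite ge0_sume_distrr.
Qed.

Lemma K_le f g s : (forall x, 0 <= f x) ->
  (forall x, x <> e0 -> (T s x != 0)%R -> f x <= g x) -> K f s <= K g s.
Proof.
move=> f0 hfg; apply: le_esum => x hx.
have [->|hn] := eqVneq (T s x) 0%R; first by rewrite !mul0e.
by apply: lee_wpmul2l; [rewrite lee_fin T_ge0|exact: hfg].
Qed.

Lemma K_ext f g s : (forall x, x <> e0 -> f x = g x) -> K f s = K g s.
Proof. by move=> h; apply: eq_esum => x hx; rewrite h. Qed.

Lemma K1 s : (T s e0)%:E + K (fun=> 1) s = 1.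
Proof. by rewrite -[RHS](esumT1 s) esum_split // mule1. Qed.

Lemma K1_le s : K (fun=> 1) s <= 1.
Proof. by rewrite -[X in _ <= X](K1 s) [X in _ <= X]addeC leeDl // lee_fin T_ge0. Qed.

Definition F k s := first_return lam p k s.

Lemma F_ge0 k s : 0 <= F k s.
Proof.
elim: k s => [|k IH] s /=; first by rewrite /F /= lee_fin T_ge0.
by apply: esum_ge0 => x _; apply: mule_ge0 => //; rewrite lee_fin T_ge0.
Qed.

Lemma FS k s : F k.+1 s = K (F k) s.
Proof. by []. Qed.

Definition H N s := \sum_(k < N) F k s.

Lemma H_ge0 N s : 0 <= H N s.
Proof. by apply: sume_ge0 => k _; exact: F_ge0. Qed.

Fixpoint Rt N s := match N with 0 => 1 | N'.+1 => K (Rt N') s end.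

Lemma Rt_ge0 N s : 0 <= Rt N s.
Proof. by elim: N s => [|N IH] s //=; exact: K_ge0. Qed.

Lemma H_S N s : H N.+1 s = (T s e0)%:E + K (H N) s.
Proof.
rewrite /H big_ord_recl /=; congr (_ + _).
by rewrite K_sum //; move=> k x; exact: F_ge0.
Qed.

Lemma H_Rt N s : H N s + Rt N s = 1.
Proof.
elim: N s => [|N IH] s; first by rewrite /H big_ord0 add0e.
rewrite H_S /= -addeA -KD; [|exact: H_ge0|exact: Rt_ge0].
by rewrite (@K_ext _ (fun=> 1)) ?K1 // => x _; rewrite IH.
Qed.

Lemma H_le1 N s : H N s <= 1.
Proof. by rewrite -(H_Rt N s) leeDl // Rt_ge0. Qed.

Definition G N s := \sum_(k < N) ((k.+1)%:R%:E * F k s).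

Lemma G_ge0 N s : 0 <= G N s.
Proof. by apply: sume_ge0 => k _; apply: mule_ge0 => //; exact: F_ge0. Qed.

Lemma G_S N s : G N.+1 s = (T s e0)%:E + K (fun x => G N x + H N x) s.
Proof.
rewrite /G big_ord_recl /= mul1e; congr (_ + _).
transitivity (\sum_(k < N) K (fun x => (k.+2)%:R%:E * F k x) s).
  by apply: eq_bigr => k _; rewrite KZ //; move=> x; exact: F_ge0.
rewrite -(@K_sum N (fun k x => (k.+2)%:R%:E * F k x) s); last by move=> k x; apply: mule_ge0 => //; exact: F_ge0.
apply: K_ext => x _; rewrite /H -big_split /=; apply: eq_bigr => k _.
by rewrite -[in LHS]addn1 natrD EFinD ge0_muleDl ?mul1e // ?F_ge0.
Qed.

Definition M N s := G N s + (N.+1)%:R%:E * Rt N s.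

Lemma M_ge0 N s : 0 <= M N s.
Proof. by apply: adde_ge0; [exact: G_ge0|apply: mule_ge0 => //; exact: Rt_ge0]. Qed.

Lemma M_S N s : M N.+1 s = 1 + K (M N) s.
Proof.
rewrite /M G_S /= -KZ //; last by move=> x; exact: Rt_ge0.
rewrite -addeA -KD; last 2 first.
- by move=> x; apply: adde_ge0; [exact: G_ge0|exact: H_ge0].
- by move=> x; apply: mule_ge0 => //; exact: Rt_ge0.
rewrite (@K_ext _ (fun x => M N x + 1)); last first.
  move=> x _; rewrite /M -(H_Rt N x) -[N.+2]addn1 natrD EFinD ge0_muleDl // ?Rt_ge0 // mul1e.
  by rewrite addeACA.
rewrite KD //; last by move=> x; exact: M_ge0.
by rewrite [_ + K (fun=> 1) s]addeC addeA K1.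
Qed.

Section Xsec.
Variable u : S -> R.
Hypothesis u_ge0 : forall s, (0 <= u s)%R.
Hypothesis u_e0 : u e0 = 0%R.

Fixpoint X N s := match N with 0 => (u s)%:E | N'.+1 => K (X N') s end.

Lemma X_ge0 N s : 0 <= X N s.
Proof. by elim: N s => [|N IH] s /=; [rewrite lee_fin|exact: K_ge0]. Qed.

Lemma K_u s : K (fun x => (u x)%:E) s = \esum_(s' in setT) ((T s s')%:E * (u s')%:E).
Proof. by rewrite esum_split ?u_e0 ?mule0 ?add0e // => x; rewrite lee_fin. Qed.

Hypothesis u_sub : forall s, (u s)%:E <= \esum_(s' in setT) ((T s s')%:E * (u s')%:E).

Lemma X_lower N s : (u s)%:E <= X N s.
Proof.
elim: N s => [|N IH] s //=.
apply: le_trans (u_sub s) _; rewrite -K_u.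
by apply: K_le => [x|x _ _]; [rewrite lee_fin|exact: IH].
Qed.

Lemma X_e0 N : \esum_(s' in setT) ((T e0 s')%:E * (u s')%:E) <= X N.+1 e0.
Proof. by rewrite /= -K_u; apply: K_le => [x|x _ _]; [rewrite lee_fin|exact: X_lower]. Qed.

Hypothesis u_step : forall s s', (T s s' != 0)%R -> (u s' <= u s + 1)%R.

Lemma X_upper N s : X N s <= (u s + N%:R)%R%:E * Rt N s.
Proof.
elim: N s => [|N IH] s /=; first by rewrite addr0 mule1.
apply: (@le_trans _ _ (K (fun x => (u s + N.+1%:R)%R%:E * Rt N x) s)).
  apply: K_le => [x|x _ hT]; first exact: X_ge0.
  apply: le_trans (IH x) _; apply: lee_wpmul2r; first exact: Rt_ge0.
  rewrite lee_fin -addn1 natrD addrA; have := u_step hT; lra.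
rewrite (@KZ (u s + N.+1%:R)%R (Rt N) s) //; last exact: Rt_ge0.
by rewrite addr_ge0 // u_ge0.
Qed.

End Xsec.


Lemma partialF N s : \sum_(0 <= k < N) F k s = H N s.
Proof. by rewrite /H big_mkord. Qed.

Lemma partialG N s : \sum_(0 <= k < N) ((k.+1)%:R%:E * F k s) = G N s.
Proof. by rewrite /G big_mkord. Qed.

Lemma Rt_le1 N s : Rt N s <= 1.
Proof. by rewrite -(H_Rt N s) leeDr // H_ge0. Qed.

Lemma Rt_fin N s : Rt N s \is a fin_num.
Proof.
by rewrite fin_numElt (lt_le_trans _ (Rt_ge0 N s)) ?ltNyr // (le_lt_trans (Rt_le1 N s)) ?ltry.
Qed.

Lemma H_fin N s : H N s \is a fin_num.
Proof.
by rewrite fin_numElt (lt_le_trans _ (H_ge0 N s)) ?ltNyr // (le_lt_trans (H_le1 N s)) ?ltry.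
Qed.

Section Lyap.
Variable V : S -> R.
Hypothesis V_ge0 : forall s, (0 <= V s)%R.
Hypothesis V_e0 : V e0 = 0%R.
Hypothesis V_drift : forall s, s <> e0 ->
  \esum_(s' in setT) ((T s s')%:E * (V s')%:E) + 1 <= (V s)%:E.
Variable c1 : R.
Hypothesis hC : K (fun x => (V x + 1)%R%:E) e0 <= c1%:E.

Lemma M0 s : M 0 s = 1.
Proof. by rewrite /M /G big_ord0 add0e /= mul1e. Qed.

Lemma M_lyap N s : s <> e0 -> M N s <= (V s + 1)%R%:E.
Proof.
elim: N s => [|N IH] s hs.
  by rewrite M0 lee_fin lerDr.
rewrite M_S.
apply: (@le_trans _ _ (1 + K (fun x => (V x + 1)%R%:E) s)).
  rewrite leeD2l //; apply: K_le => [x|x hx _]; [exact: M_ge0|exact: IH].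
rewrite (@K_ext _ (fun x => (V x)%:E + 1)) // KD; [|by move=> x; rewrite lee_fin|by []].
have -> : K (fun x => (V x)%:E) s = \esum_(s' in setT) ((T s s')%:E * (V s')%:E).
  by rewrite esum_split ?V_e0 ?mule0 ?add0e // => x; rewrite lee_fin.
rewrite EFinD [X in X <= _]addeC; apply: leeD => //; apply: le_trans (V_drift hs).
by apply: leeD => //; exact: K1_le.
Qed.

Lemma c1_ge0 : (0 <= c1)%R.
Proof.
by rewrite -lee_fin; apply: le_trans hC; apply: K_ge0 => x; rewrite lee_fin addr_ge0.
Qed.

Lemma M_e0 N : M N e0 <= (1 + c1)%R%:E.
Proof.
case: N => [|N]; first by rewrite M0 lee_fin lerDl c1_ge0.
rewrite M_S EFinD leeD2l //; apply: le_trans hC.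
by apply: K_le => [x|x hx _]; [exact: M_ge0|exact: M_lyap].
Qed.

Lemma stable_lyap : stable lam p.
Proof.
split.
  apply/eqP; rewrite eq_le; apply/andP; split.
    apply: lime_le; first by apply: is_cvg_nneseries => k _ _; exact: F_ge0.
    by near=> N; rewrite partialF H_le1.
  apply/lee_addgt0Pr => eps eps0.
  pose N := Num.Def.trunc ((1 + c1) / eps).
  have hN : ((1 + c1) / eps < N.+1%:R)%R by exact: truncnS_gt.
  rewrite -(H_Rt N.+1 e0); apply: leeD.
    by rewrite -partialF; apply: nneseries_lim_ge => k _ _; exact: F_ge0.
  have hM : (N.+2%:R)%:E * Rt N.+1 e0 <= (1 + c1)%R%:E.
    by apply: le_trans (M_e0 N.+1); rewrite /M leeDr // G_ge0.
  move: hM; rewrite -(fineK (Rt_fin N.+1 e0)) -EFinM lee_fin => hM.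
  rewrite lee_fin.
  have h0 := c1_ge0.
  have hr : (0 <= fine (Rt N.+1 e0))%R by rewrite -lee_fin fineK ?Rt_ge0 // Rt_fin.
  have hN' : (1 + c1 < eps * N.+1%:R)%R by rewrite -ltr_pdivrMl // mulrC.
  have h2 : (N.+2%:R = N.+1%:R + 1 :> R)%R by rewrite -addn1 natrD.
  rewrite h2 in hM; nra.
apply: (@le_lt_trans _ _ (1 + c1)%R%:E); last exact: ltry.
apply: lime_le.
  by apply: is_cvg_nneseries => k _ _; apply: mule_ge0 => //; exact: F_ge0.
near=> N; rewrite partialG; apply: le_trans (M_e0 N).
by rewrite /M leeDl // mule_ge0 // Rt_ge0.
Unshelve. all: by end_near.
Qed.

End Lyap.

Section NotStable.
Variable u : S -> R.
Hypothesis u_ge0 : forall s, (0 <= u s)%R.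
Hypothesis u_e0 : u e0 = 0%R.
Hypothesis u_sub : forall s, (u s)%:E <= \esum_(s' in setT) ((T s s')%:E * (u s')%:E).
Hypothesis u_step : forall s s', (T s s' != 0)%R -> (u s' <= u s + 1)%R.
Variable c0 : R.
Hypothesis c0_gt0 : (0 < c0)%R.
Hypothesis hc0 : c0%:E <= \esum_(s' in setT) ((T e0 s')%:E * (u s')%:E).

Lemma not_stable : ~ stable lam p.
Proof.
move=> [h1 h2].
pose a k := (k.+1)%:R%:E * F k e0.
have a0 k : 0 <= a k by apply: mule_ge0 => //; exact: F_ge0.
have tail := nneseries_tail_cvg h2 (fun k _ => a0 k).
have key N : c0%:E <= \sum_(N.+1 <= k <oo) a k.
  apply: le_trans hc0 _; apply: le_trans (X_e0 u_ge0 u_e0 u_sub N) _.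
  apply: le_trans (X_upper u_ge0 u_step N.+1 e0) _.
  rewrite u_e0 add0r.
  have -> : Rt N.+1 e0 = \sum_(N.+1 <= k <oo) F k e0.
    have hs := nneseries_split 0 N.+1 (fun k _ => F_ge0 k e0).
    rewrite add0n h1 partialF -(H_Rt N.+1 e0) in hs.
    have := congr1 (fun x => x - H N.+1 e0) hs.
    by rewrite [X in X - _ = _]addeC [X in _ = X - _ -> _]addeC !addeK ?H_fin.
  rewrite -(@nneseriesZl _ (fun k => F k e0)); last by move=> k _; exact: F_ge0.
  apply: lee_lim.
  - by apply: is_cvg_nneseries => k _ _; apply: mule_ge0 => //; exact: F_ge0.
  - by apply: is_cvg_nneseries => k _ _; exact: a0.
  near=> m; rewrite big_seq [X in _ <= X]big_seq; apply: lee_sum => k.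
  rewrite mem_index_iota => /andP[hk _]; rewrite /a; apply: lee_wpmul2r; first exact: F_ge0.
  by rewrite lee_fin ler_nat (leq_trans hk (leqnSn k)).
have := cvg_lim _ tail; move=> /(_ (@ereal_hausdorff _)) hl.
have : c0%:E <= 0.
  rewrite -hl; apply: lime_ge; first by apply/cvg_ex; exists 0.
  by near=> N; have := key N.-1; rewrite prednK //; near: N; exists 1%N.
by rewrite lee_fin leNgt c0_gt0.
Unshelve. all: by end_near.
Qed.

End NotStable.

Local Open Scope ring_scope.

Definition Wt (w : 'I_n -> R) (s : S) : R := \sum_x w x * (qsize p s x)%:R.

Lemma sum_ind (w : 'I_n -> R) i : \sum_x w x * ((x == i) : nat)%:R = w i.
Proof.
rewrite (bigD1 i) //= eqxx mulr1 big1 ?addr0 // => x /negbTE ->.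
by rewrite mulr0.
Qed.

Lemma Wt_None w s i s' : Phi p s i None s' != 0 -> Wt w s' = Wt w s + w i.
Proof.
case: Had => _ [_ [_ [hN _]]] /eqP /hN h.
rewrite /Wt -(sum_ind w i) -big_split /=; apply: eq_bigr => x _.
by rewrite h natrD mulrDr.
Qed.

Lemma Wt_Some w s i j s' : Phi p s i (Some j) s' != 0 ->
  [/\ e i j, (0 < qsize p s j)%N & Wt w s' = Wt w s - w j].
Proof.
case: Had => _ [_ [_ [_ [hS _]]]] /eqP /hS [hij hq h]; split => //.
rewrite /Wt -(sum_ind w j) -sumrB; apply: eq_bigr => x _.
rewrite h -mulrBr; congr (_ * _).
case: (eqVneq x j) => [->|hx]; first by rewrite natrB.
by rewrite subn0 subr0.
Qed.

Lemma q_e0 x : qsize p e0 x = 0%N.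
Proof. by case: Had => h _; move: x; apply/(h e0). Qed.

Lemma Wt_e0 w : Wt w e0 = 0.
Proof. by rewrite /Wt big1 // => x _; rewrite q_e0 mulr0. Qed.

Lemma nonempty s : s <> e0 -> exists w, (0 < qsize p s w)%N.
Proof.
move=> hs; apply: contra_notP hs => /forallNP h.
case: Had => hE _; apply/hE => x.
by have := h x; rewrite lt0n => /negP; rewrite negbK => /eqP.
Qed.

Definition Lq s := Wt (fun=> 1) s.

Lemma Lq_ge0 s : 0 <= Lq s.
Proof. by apply: sumr_ge0 => x _; rewrite mul1r ler0n. Qed.

Lemma Lq_ge1 s w : (0 < qsize p s w)%N -> 1 <= Lq s.
Proof.
move=> hq; rewrite /Lq /Wt (bigD1 w) //= mul1r.
have h1 : 1 <= (qsize p s w)%:R :> R by rewrite ler1n.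
have h2 : 0 <= \sum_(x | x != w) 1 * (qsize p s x)%:R :> R.
  by apply: sumr_ge0 => x _; rewrite mul1r ler0n.
lra.
Qed.

Lemma T_ge_Phi s i j s' : cc i * Phi p s i j s' <= T s s'.
Proof.
rewrite T_def (bigD1 i) //=.
apply: (@le_trans _ _ (cc i * \sum_j0 Phi p s i j0 s')).
  apply: ler_wpM2l; first exact: cc_ge0.
  rewrite (bigD1 j) //= lerDl; apply: sumr_ge0 => ? _; exact: Phi_ge0.
rewrite lerDl; apply: sumr_ge0 => k _; apply: mulr_ge0; first exact: cc_ge0.
by apply: sumr_ge0 => ? _; exact: Phi_ge0.
Qed.

Lemma T_pos s i j s' : Phi p s i j s' != 0 -> T s s' != 0.
Proof.
move=> hP; have hc : 0 < cc i by rewrite /cc divr_gt0 // Lam_gt0.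
have hp0 : 0 < Phi p s i j s' by rewrite lt_def hP Phi_ge0.
have := T_ge_Phi s i j s'; have := mulr_gt0 hc hp0.
by move=> h1 h2; rewrite gt_eqF // (lt_le_trans h1 h2).
Qed.

Section Greedy.
Hypothesis Hg : greedy e p.
Variable dl : R.
Hypothesis dl_gt0 : 0 < dl.
Hypothesis hdl : forall w, 2 * \sum_(i | ~~ e i w) cc i + dl <= 1.

Definition Vg s := Lq s / dl.

Lemma sum_ind_pred (P : pred 'I_n) : \sum_i cc i * (P i)%:R = \sum_(i | P i) cc i.
Proof. by rewrite [RHS]big_mkcond; apply: eq_bigr => i _; case: (P i); rewrite ?mulr1 ?mulr0. Qed.

Lemma Vg_drift s : s <> e0 ->
  (\esum_(s' in setT) ((T s s')%:E * (Vg s')%:E) + 1 <= (Vg s)%:E)%E.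
Proof.
move=> /nonempty [w hw].
have hL := Lq_ge1 hw.
pose b i := (Lq s - 1 + 2 * (~~ e i w)%:R) / dl.
apply: (@le_trans _ _ (\sum_i (cc i * b i)%:E + 1)%E).
  apply: leeD => //; apply: drift_le.
  - by move=> x; rewrite lee_fin divr_ge0 ?Lq_ge0 // ltW.
  - move=> i; rewrite /b divr_ge0 ?(ltW dl_gt0) //.
    by apply: addr_ge0; [lra|rewrite mulr_ge0 ?ler0n].
  move=> i [j|] s' _ hP; rewrite lee_fin /Vg /b /Lq.
    have [_ _ ->] := Wt_Some (fun=> 1) hP.
    rewrite ler_pM2r ?invr_gt0 //.
    have : 0 <= 2 * (~~ e i w)%:R :> R by rewrite mulr_ge0 ?ler0n.
    lra.
  have hei : ~~ e i w.
    apply/negP => hei; move: hP; by rewrite (Hg s' hei hw) eqxx.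
  rewrite hei (Wt_None (fun=> 1) hP) mulr1 ler_pM2r ?invr_gt0 //.
  lra.
rewrite sumEFin -EFinD lee_fin.
have -> : \sum_i cc i * b i = (Lq s - 1) / dl + 2 / dl * \sum_(i | ~~ e i w) cc i.
  transitivity (\sum_i (cc i * ((Lq s - 1) / dl) + 2 / dl * (cc i * (~~ e i w)%:R))).
    by apply: eq_bigr => i _; rewrite /b; ring.
  by rewrite big_split /= -mulr_suml sum_cc mul1r -sum_ind_pred mulr_sumr.
have h := hdl w.
rewrite /Vg.
have -> : Lq s / dl = (Lq s - 1) / dl + 2 / dl * \sum_(i | ~~ e i w) cc i + 1 +
   (1 - (2 * \sum_(i | ~~ e i w) cc i + dl)) / dl.
  by field; rewrite gt_eqF.
by rewrite lerDl divr_ge0 ?subr_ge0 // ltW.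
Qed.

Lemma greedy_stable : stable lam p.
Proof.
apply: (@stable_lyap Vg _ _ Vg_drift (1 / dl + 1)).
- by move=> s; rewrite divr_ge0 ?Lq_ge0 // ltW.
- by rewrite /Vg /Lq Wt_e0 mul0r.
apply: (le_trans (drift_le (b := fun=> 1 / dl + 1) _ _ _)).
- by move=> x; rewrite lee_fin addr_ge0 // divr_ge0 ?Lq_ge0 // ltW.
- by move=> i; rewrite addr_ge0 // divr_ge0 // ltW.
- move=> i [j|] s' _ hP.
    by have [_] := Wt_Some (fun=> 1) hP; rewrite q_e0.
  by rewrite /Vg /Lq (Wt_None (fun=> 1) hP) Wt_e0 add0r.
by rewrite sumEFin -mulr_suml sum_cc [X in (X%:E <= _)%E]mul1r.
Qed.

End Greedy.

Section Necessity.
Variable w : 'I_n.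
Hypothesis hind : forall i j, ~~ e i w -> ~~ e j w -> ~~ e i j.
Hypothesis hp : 1 <= 2 * \sum_(i | ~~ e i w) cc i.

Definition wd (x : 'I_n) : R := if ~~ e x w then 1 else -1.
Definition Dw s := Wt wd s.
Definition uw s := Num.max (Dw s) 0.

Lemma uw_ge0 s : 0 <= uw s.
Proof. by rewrite /uw le_max lexx orbT. Qed.

Lemma Dw_le s : Dw s <= uw s.
Proof. by rewrite /uw le_max lexx. Qed.

Lemma uw_e0 : uw e0 = 0.
Proof. by rewrite /uw /Dw Wt_e0 maxxx. Qed.

Lemma Dw_step s s' : T s s' != 0 -> Dw s - 1 <= Dw s' <= Dw s + 1.
Proof.
move=> /T_neq0 [i [[j|] hP]].
  rewrite /Dw; have [_ _ ->] := Wt_Some wd hP; rewrite /wd; case: (~~ e j w); apply/andP; split; lra.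
rewrite /Dw (Wt_None wd hP) /wd; case: (~~ e i w); apply/andP; split; lra.
Qed.

Lemma uw_step s s' : T s s' != 0 -> uw s' <= uw s + 1.
Proof.
move=> /Dw_step /andP [_ h]; have := Dw_le s; have := uw_ge0 s.
rewrite /uw ge_max => h1 h2; apply/andP; split; lra.
Qed.

Lemma uw_sub s : ((uw s)%:E <= \esum_(s' in setT) ((T s s')%:E * (uw s')%:E))%E.
Proof.
have [hD|hD] := leP (Dw s) 0.
  rewrite /uw max_r //; apply: esum_ge0 => x _; apply: mule_ge0; rewrite lee_fin ?T_ge0 //.
  exact: uw_ge0.
pose b i := if ~~ e i w then Dw s + 1 else Num.max (Dw s - 1) 0.
apply: le_trans (drift_ge (b := b) _ _ _).
- rewrite sumEFin lee_fin /uw max_l; last exact: ltW.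
  apply: (@le_trans _ _ (\sum_i cc i * (Dw s + wd i))).
    rewrite (eq_bigr (fun i => cc i * Dw s + cc i * wd i)); last by move=> i _; rewrite mulrDr.
    rewrite big_split /= -mulr_suml sum_cc mul1r lerDl.
    rewrite (eq_bigr (fun i => 2 * (cc i * (~~ e i w)%:R) - cc i)); last first.
      by move=> i _; rewrite /wd; case: (~~ e i w) => /=; ring.
    rewrite sumrB -mulr_sumr sum_ind_pred sum_cc subr_ge0; exact: hp.
  apply: ler_sum => i _; apply: ler_wpM2l; first exact: cc_ge0.
  rewrite /b /wd; case: (~~ e i w); first by [].
  by rewrite le_max; apply/orP; left.
- by move=> x; rewrite lee_fin uw_ge0.
- by move=> i; rewrite /b; case: (~~ e i w); [lra|rewrite le_max lexx orbT].
move=> i j s' hP; rewrite lee_fin /b.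
case hi: (~~ e i w).
  apply: le_trans (Dw_le s'); case: j hP => [j|] hP.
    rewrite /Dw; have [hij _ ->] := Wt_Some wd hP; rewrite /wd.
    case hj: (~~ e j w); last lra.
    by have := hind hi hj; rewrite hij.
  by rewrite /Dw (Wt_None wd hP) /wd hi.
have hs := T_pos hP.
have := Dw_step hs => /andP [h1 _].
rewrite ge_max (uw_ge0 s') andbT; apply: le_trans (Dw_le s'); exact: h1.
Qed.

Lemma necessity_contra : ~ stable lam p.
Proof.
have hc : 0 < \sum_(i | ~~ e i w) cc i.
  have h2 : 0 < 2 * \sum_(i | ~~ e i w) cc i by apply: lt_le_trans hp.
  by rewrite pmulr_rgt0 in h2.
apply: (@not_stable uw uw_ge0 uw_e0 uw_sub uw_step _ hc).
apply: le_trans (drift_ge (b := fun i => (~~ e i w)%:R) _ _ _).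
- by rewrite sumEFin lee_fin sum_ind_pred.
- by move=> x; rewrite lee_fin uw_ge0.
- by move=> i; rewrite ler0n.
move=> i [j|] s' hP.
  by have [_] := Wt_Some wd hP; rewrite q_e0.
rewrite lee_fin; case hi: (~~ e i w); last by rewrite uw_ge0.
by apply: le_trans (Dw_le s'); rewrite /Dw (Wt_None wd hP) Wt_e0 /wd hi add0r.
Qed.

End Necessity.
End Chain.

End Helpers2.

Lemma diamond_hind (w i j : 'I_4) :
  ~~ diamond_rel i w -> ~~ diamond_rel j w -> ~~ diamond_rel i j.
Proof.
by case: w => [[|[|[|[|//]]]] ?]; case: i => [[|[|[|[|//]]]] ?];
   case: j => [[|[|[|[|//]]]] ?].
Qed.


Lemma sum_sub_le (R : realType) (n : nat) (lam : 'I_n -> R) (A B : {set 'I_n}) :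
  (forall i, 0 <= lam i) -> B \subset A -> \sum_(i in B) lam i <= \sum_(i in A) lam i.
Proof.
move=> h0 hBA; rewrite [X in _ <= X](big_setID B) /= (finset.setIidPr hBA) lerDl.
by apply: sumr_ge0 => i _.
Qed.


Unset Implicit Arguments.
Set Strict Implicit.

Theorem corollaryA2 (R : realType) (n : nat) (e : rel 'I_n)
  (lam : 'I_n -> R) :
  simple_graph e ->
  (forall i, 0 < lam i) ->
  ((complete_graph e /\ (3 <= n)%N) \/
   (exists H : n = 4%N,
      forall x y : 'I_n, e x y = diamond_rel (cast_ord H x) (cast_ord H y)) ->
   stabilizable e lam ->
   condC e lam /\
   (forall p : policy R n, adapted e lam p -> greedy e p -> stable lam p)) /\
  (diameter_ge3 e \/ (exists x, degree e x = 1%N) -> ~ condC e lam).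
Proof.
move=> [esym eirr] hlam.
have Lgt : forall (A : {pred 'I_n}), 0 <= \sum_(i in A) lam i.
  by move=> A; apply: sumr_ge0 => i _; exact: ltW.
split.
  move=> hG [p0 [had0 hst0]].
  have n0 : (0 < n)%N.
    by case: hG => [[_ h]|[H _]]; [exact: leq_trans h|rewrite H].
  have hind : forall w i j, ~~ e i w -> ~~ e j w -> ~~ e i j.
    case: hG => [[hc _]|[H he]] w i j.
      by rewrite !hc !negbK => /eqP -> /eqP ->; rewrite eqxx.
    by rewrite !he; exact: diamond_hind.
  have hp : forall w, 2 * \sum_(i | ~~ e i w) cc lam i < 1.
    move=> w; rewrite ltNge; apply/negP => hw.
    exact: (necessity_contra hlam n0 had0 (hind w) hw hst0).
  have Lpos : 0 < \sum_(k : 'I_n) lam k by exact: (Lam_gt0 hlam n0).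
  split.
    move=> I /andP [hI _]; case/card_gt0P: hI => w wI.
    have hsub : nbhd e w \subset nbhd_set e I.
      by apply/fintype.subsetP => x hx; apply/finset.bigcupP; exists w.
    apply: lt_le_trans (sum_sub_le (fun i => ltW (hlam i)) hsub).
    have hA : \sum_(i in nbhd e w) lam i = \sum_(i | e w i) lam i.
      by apply: eq_bigl => i; rewrite inE.
    have hL : \sum_(k : 'I_n) lam k = \sum_(i | e w i) lam i + \sum_(i | ~~ e w i) lam i.
      by rewrite (bigID (fun i => e w i)).
    have hB : \sum_(i | ~~ e i w) cc lam i = (\sum_(i | ~~ e w i) lam i) / \sum_(k : 'I_n) lam k.
      rewrite /cc -mulr_suml; congr (_ * _); apply: eq_bigl => i.
      by rewrite (esym i w).
    have := hp w; rewrite hB mulrA ltr_pdivrMr // mul1r => h2.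
    rewrite hA; move: h2 hL.
    set A := \sum_(i | e w i) lam i; set B := \sum_(i | ~~ e w i) lam i.
    set L := \sum_(k : 'I_n) lam k.
    lra.
  move=> p hadp hg.
  pose m := \big[Num.max/0]_w (\sum_(i | ~~ e i w) cc lam i).
  have hm : m < 2^-1.
    apply/bigmax_ltP; split => [|w _]; first by rewrite invr_gt0.
    by have := hp w; lra.
  apply: (greedy_stable hlam n0 hadp hg (dl := 1 - 2 * m)); first by lra.
  move=> w; have : \sum_(i | ~~ e i w) cc lam i <= m.
    exact: (le_bigmax 0 (fun w => \sum_(i | ~~ e i w) cc lam i) w).
  lra.
move=> [[x [y hxy]]|[x hx]] hC.
  have indep z : independent e [set z].
    rewrite /independent cards1 /=; apply/forall_inP => a /set1P ->.
    by apply/forall_inP => b /set1P ->; rewrite eirr.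
  have nb z : nbhd_set e [set z] = nbhd e z by rewrite /nbhd_set big_set1.
  have h1 := hC _ (indep x); have h2 := hC _ (indep y).
  rewrite nb in h1; rewrite nb in h2.
  have hdis : [disjoint nbhd e x & nbhd e y].
    apply/pred0P => z /=; rewrite !inE; apply/negP => /andP [hxz hyz].
    move/negP: hxy; apply; rewrite /=; apply/orP; right; apply/existsP; exists z.
    rewrite hxz /=; apply/orP; right; apply/existsP; exists y.
    by rewrite eqxx andbT esym.
  have hU : \sum_(i in nbhd e x :|: nbhd e y) lam i <= \sum_(i : 'I_n) lam i.
    by rewrite [X in _ <= X](bigID (mem (nbhd e x :|: nbhd e y))) /= lerDl Lgt.
  rewrite (eq_bigl [predU (nbhd e x) & (nbhd e y)]) in hU; last by move=> i; rewrite inE.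
  rewrite bigU //= in hU.
  move: h1 h2 hU.
  set a := \sum_(i in nbhd e x) lam i; set b := \sum_(i in nbhd e y) lam i.
  set L := \sum_(i : 'I_n) lam i.
  lra.
move: hx; rewrite /degree => /eqP /cards1P [y hy].
have indep z : independent e [set z].
  rewrite /independent cards1 /=; apply/forall_inP => a /set1P ->.
  by apply/forall_inP => b /set1P ->; rewrite eirr.
have nb z : nbhd_set e [set z] = nbhd e z by rewrite /nbhd_set big_set1.
have h1 := hC _ (indep x); have h2 := hC _ (indep y).
rewrite nb hy big_set1 in h1; rewrite nb in h2.
have hyy : y \notin nbhd e y by rewrite inE eirr.
have hU : \sum_(i in nbhd e y) lam i + lam y <= \sum_(i : 'I_n) lam i.
  rewrite [X in _ <= X](bigID (mem (nbhd e y))) /= lerD2l.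
  rewrite (bigD1 y) /=; last by [].
  by rewrite lerDl; apply: sumr_ge0 => i _; exact: ltW.
move: h1 h2 hU.
set a := \sum_(i in nbhd e y) lam i.
set L := \sum_(i : 'I_n) lam i.
lra.
Qed.
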